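(* Let $\Gamma=(U\cup V,E)$ be a $3$-regular bipartite graph with bipartition $U,V$, let $m=|U|=|V|$ and $n=10m$, and let $\hat\Gamma$, $X$, $Y$, $\eta$, $\eta'$, $M$ be as described in the context. Then $$\det(M)=|\{\mu\in \mathrm{UMatch}(\hat\Gamma): \mathrm{sgn}(\mu)=1\}|-|\{\mu\in \mathrm{UMatch}(\hat\Gamma): \mathrm{sgn}(\mu)=-1\}|,$$ where $\mathrm{UMatch}(\hat\Gamma)$ is the set of uniform perfect matchings of $\hat\Gamma$.
   Context: Construction of $\hat\Gamma$: for each vertex $v$ of $\Gamma$ with neighbours $x,y,z$, there are four inner vertices $a_{v,S}$, one for each subset $S\subseteq\{x,y,z\}$ of even size (write $I_v$ for this set), and six outer vertices $b_{v,u,0},b_{v,u,1}$ for $u\in\{x,y,z\}$ (write $O_v$ for this set). Within the gadget, $a_{v,S}$ is adjacent to $b_{v,u,1}$ if $u\in S$ and to $b_{v,u,0}$ if $u\notin S$. For each edge $e=\{u,v\}\in E$ and $i\in\{0,1\}$ there is an edge $e_i$ of $\hat\Gamma$ joining $b_{v,u,i}$ and $b_{u,v,i}$. There are no other edges. Let $X=\bigcup_{v\in U}I_v\cup\bigcup_{v\in V}O_v$ and $Y=\bigcup_{v\in V}I_v\cup\bigcup_{v\in U}O_v$; every edge of $\hat\Gamma$ joins $X$ and $Y$, and $|X|=|Y|=n$. Fix bijections $\eta:X\to[n]$ and $\eta':Y\to[n]$, and let $M$ be the $n\times n$ $\{0,1\}$-matrix with $M(\eta(x),\eta'(y))=1$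 iff $x$ and $y$ are adjacent in $\hat\Gamma$. A perfect matching of $\hat\Gamma$ is identified with a bijection $\mu:X\to Y$ such that $\mu(x)$ is adjacent to $x$ for all $x\in X$; its sign $\mathrm{sgn}(\mu)$ is the sign of the permutation $\eta'\circ\mu\circ\eta^{-1}$ of $[n]$. A perfect matching $\mu$ is uniform if for every $e\in E$ at most one of $e_0,e_1$ belongs to $\mu$. *)

(* Defs.v *)
From mathcomp Require Import all_boot all_order all_fingroup all_algebra.
Set Implicit Arguments. Unset Strict Implicit. Unset Printing Implicit Defensive.
Import GRing.Theory.

Section Gadget.
Variables (T : finType) (e : rel T) (U V : {set T}).

Definition nbhd (v : T) : {set T} := [set u | e v u].

(* Vertices of hat Gamma live in the type
     inl (v, A)      = inner vertex a_{v,S}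
     inr (v, u, i)   = outer vertex b_{v,u,i}  (i : bool, false = 0, true = 1)
   restricted to the valid ones by [hvalid]. *)
Definition hatV : finType := ((T * {set T}) + (T * T * bool))%type.

Definition hvalid (w : hatV) : bool :=
  match w with
  | inl (v, A) => (A \subset nbhd v) && ~~ odd #|A|
  | inr (v, u, _) => u \in nbhd v
  end.

Definition inner (v : T) (A : {set T}) : hatV := inl (v, A).
Definition outer (v u : T) (i : bool) : hatV := inr (v, u, i).

Definition gadget_adj (x y : hatV) : bool :=
  match x, y with
  | inl (v, A), inr (v', u, i) => (v' == v) && ((u \in A) == i)
  | _, _ => false
  end.

Definition edge_adj (x y : hatV) : bool :=
  match x, y with
  | inr (v, u, i), inr (v', u', i') => [&& i == i', v' == u & u' == v]
  | _, _ => false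
  end.

Definition hadj (x y : hatV) : bool :=
  [&& hvalid x, hvalid y &
      [|| gadget_adj x y, gadget_adj y x | edge_adj x y]].

Definition Xset : {set hatV} :=
  [set w | hvalid w &&
     match w with
     | inl (v, _) => v \in U
     | inr (v, _, _) => v \in V
     end].

Definition Yset : {set hatV} :=
  [set w | hvalid w &&
     match w with
     | inl (v, _) => v \in V
     | inr (v, _, _) => v \in U
     end].

Variables (n : nat) (etai etai' : 'I_n -> hatV).
(* etai = eta^{-1} : [n] -> X, etai' = eta'^{-1} : [n] -> Y *)

Definition Mmat : 'M[int]_n := \matrix_(i, j) Posz (hadj (etai i) (etai' j) : nat).

(* A perfect matching mu : X -> Y is encoded by the permutation
   sigma = eta' o mu o eta^{-1} of [n]; mu is recovered as
   mu (etai k) = etai' (sigma k). sgn(mu) = sgn(sigma). *)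
Definition is_pmatching (s : 'S_n) : bool :=
  [forall k, hadj (etai k) (etai' (s k))].

Definition in_matching (s : 'S_n) (x y : hatV) : bool :=
  [exists k, ((etai k == x) && (etai' (s k) == y)) ||
             ((etai k == y) && (etai' (s k) == x))].

Definition is_uniform (s : 'S_n) : bool :=
  [forall u, forall v, e u v ==>
     ~~ (in_matching s (outer v u false) (outer u v false) &&
         in_matching s (outer v u true) (outer u v true))].

Definition UMatch_sgn (b : bool) : {set 'S_n} :=
  [set s : 'S_n | [&& is_pmatching s, is_uniform s & odd_perm s == b]].

End Gadget.

(* Main.v *)
Require Import Defs.
From mathcomp Require Import all_boot all_order all_fingroup all_algebra.
From mathcomp Require Import zify.
Import GRing.Theory.
Set Implicit Arguments. Unset Strict Implicit. Unset Printing Implicit Defensive.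

Section Cyc.
Variable n : nat.
Definition cyc4 (a b c d : 'I_n) : 'S_n := tperm c d * tperm b c * tperm a b.

Section CycFacts.
Variables a b c d : 'I_n.
Hypotheses (ab : a != b) (ac : a != c) (ad : a != d) (bc : b != c) (bd : b != d) (cd : c != d).
Let ba : b != a. Proof. by rewrite eq_sym. Qed.
Let ca : c != a. Proof. by rewrite eq_sym. Qed.
Let da : d != a. Proof. by rewrite eq_sym. Qed.
Let cb : c != b. Proof. by rewrite eq_sym. Qed.
Let db : d != b. Proof. by rewrite eq_sym. Qed.
Let dc : d != c. Proof. by rewrite eq_sym. Qed.

Lemma cyc4a : cyc4 a b c d a = b.
Proof. by rewrite /cyc4 !permM (tpermD ca da) (tpermD ba ca) tpermL. Qed.
Lemma cyc4b : cyc4 a b c d b = c.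
Proof. by rewrite /cyc4 !permM (tpermD cb db) tpermL (tpermD ac bc). Qed.
Lemma cyc4c : cyc4 a b c d c = d.
Proof. by rewrite /cyc4 !permM tpermL (tpermD bd cd) (tpermD ad bd). Qed.
Lemma cyc4d : cyc4 a b c d d = a.
Proof. by rewrite /cyc4 !permM tpermR tpermR tpermR. Qed.
Lemma cyc4o k : k != a -> k != b -> k != c -> k != d -> cyc4 a b c d k = k.
Proof.
move=> ka kb kc kd; rewrite /cyc4 !permM.
have ak : a != k by rewrite eq_sym.
have bk : b != k by rewrite eq_sym.
have ck : c != k by rewrite eq_sym.
have dk : d != k by rewrite eq_sym.
by rewrite (tpermD ck dk) (tpermD bk ck) (tpermD ak bk).
Qed.

Lemma odd_cyc4 : odd_perm (cyc4 a b c d) = true.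
Proof. by rewrite /cyc4 !odd_permM !odd_tperm ab bc cd. Qed.
End CycFacts.

Lemma cyc4K a b c d : a != b -> a != c -> a != d -> b != c -> b != d -> c != d ->
  (cyc4 a d c b * cyc4 a b c d)%g = 1%g.
Proof.
move=> ab ac ad bc bd cd.
have ba : b != a by rewrite eq_sym.
have ca : c != a by rewrite eq_sym.
have da : d != a by rewrite eq_sym.
have cb : c != b by rewrite eq_sym.
have db : d != b by rewrite eq_sym.
have dc : d != c by rewrite eq_sym.
apply/permP => k; rewrite permM perm1.
case: (k =P a) => [->|/eqP ka]; first by rewrite cyc4a // cyc4d.
case: (k =P b) => [->|/eqP kb]; first by rewrite cyc4d // cyc4a.
case: (k =P c) => [->|/eqP kc]; first by rewrite cyc4c // cyc4b.
case: (k =P d) => [->|/eqP kd]; first by rewrite cyc4b // cyc4c.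
by rewrite !cyc4o.
Qed.
End Cyc.

Section Main.
Variables (T : finType) (e : rel T) (U V : {set T}).
Hypotheses (e_sym : symmetric e) (e_irr : irreflexive e)
  (UV_disj : [disjoint U & V])
  (e_bip : forall x y, e x y -> ((x \in U) && (y \in V)) || ((x \in V) && (y \in U)))
  (e_reg : forall v, #|nbhd e v| = 3%N).
Variables (n : nat) (etai etai' : 'I_n -> hatV T).
Hypotheses (etai_inj : injective etai) (etai_im : forall w, (w \in codom etai) = (w \in Xset e U V))
  (etai'_inj : injective etai') (etai'_im : forall w, (w \in codom etai') = (w \in Yset e U V)).

Lemma etaiX k : etai k \in Xset e U V.
Proof. by rewrite -etai_im codom_f. Qed.

Lemma UVF x : x \in U -> x \in V -> False.
Proof. by move=> xU; rewrite (disjointFr UV_disj xU). Qed.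

Lemma hadj_inner u S y : hadj e (inner u S) y -> exists2 z, z \in nbhd e u & y = outer u z (z \in S).
Proof.
case: y => [[v' A]|[[v' z] i]]; rewrite /hadj /gadget_adj /edge_adj /=.
  by case/and3P.
case/and3P => _ hz /orP [/andP [/eqP Ev /eqP Ei]|//].
by subst; exists z.
Qed.

Lemma hadj_io u (S : {set T}) z : S \subset nbhd e u -> ~~ odd #|S| -> z \in nbhd e u ->
  hadj e (inner u S) (outer u z (z \in S)).
Proof. by move=> hS ho hz; rewrite /hadj /= hS ho hz /= !eqxx. Qed.

Definition cond (s : 'S_n) (p : T * T) : bool :=
  [&& e p.1 p.2, p.1 \in U,
      in_matching etai etai' s (outer p.2 p.1 false) (outer p.1 p.2 false) &
      in_matching etai etai' s (outer p.2 p.1 true) (outer p.1 p.2 true)].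

Definition rowof (x : hatV T) (d : 'I_n) : 'I_n := odflt d [pick k | etai k == x].

Lemma rowofE x d : x \in Xset e U V -> etai (rowof x d) = x.
Proof.
rewrite -etai_im => /codomP [k ->]; rewrite /rowof.
by case: pickP => [k' /eqP //|/(_ k)]; rewrite eqxx.
Qed.

Definition partner (y : hatV T) (d : T) : T := if y is inr (_, w, _) then w else d.

Definition w'of (u v w : T) : T := odflt v [pick z in nbhd e u :\: [set v; w]].

Definition flip_at (s : 'S_n) (u v : T) (r0 : 'I_n) : 'S_n :=
  (cyc4 r0 (rowof (inner u [set v; partner (etai' (s r0)) v]) r0)
        (rowof (inner u (nbhd e u :\ v)) r0)
        (rowof (inner u [set v; w'of u v (partner (etai' (s r0)) v)]) r0) * s)%g.

Definition flip (s : 'S_n) : 'S_n :=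
  if [pick p | cond s p] is Some (u, v) then
    if [pick k | etai k == inner u set0] is Some r0 then flip_at s u v r0 else s
  else s.

Definition Nset (s : 'S_n) : bool :=
  is_pmatching e etai etai' s && ~~ is_uniform e etai etai' s.

Lemma in_matchingC s x y : in_matching etai etai' s x y = in_matching etai etai' s y x.
Proof. by apply: eq_existsb => k; rewrite orbC. Qed.

Lemma N_cond s : Nset s -> exists p, cond s p.
Proof.
case/andP => _ /forallPn [u] /forallPn [v]; rewrite negb_imply negbK.
case/andP => euv /andP [m0 m1].
case/orP: (e_bip euv) => /andP [uU vV].
  by exists (u, v); rewrite /cond /= euv uU m0 m1.
exists (v, u); rewrite /cond /= e_sym euv vV.
by rewrite in_matchingC m0 in_matchingC m1.
Qed.

Lemma in_matching_cyc (s c : 'S_n) x y :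
  (forall k, etai k = x \/ etai k = y -> c k = k) ->
  in_matching etai etai' (c * s)%g x y = in_matching etai etai' s x y.
Proof.
move=> H; apply: eq_existsb => k; rewrite permM.
case hx: (etai k == x); first by rewrite H //; left; apply/eqP.
case hy: (etai k == y); first by rewrite H //; right; apply/eqP.
by [].
Qed.

Section FlipProof.
Variable s : 'S_n.
Hypothesis pms : is_pmatching e etai etai' s.
Variables u v : T.
Hypothesis cuv : cond s (u, v).
Variable r0 : 'I_n.
Hypothesis hr0 : [pick k | etai k == inner u set0] = Some r0.
Hypothesis hp : [pick p | cond s p] = Some (u, v).

Let w := partner (etai' (s r0)) v.
Let w' := w'of u v w.
Let S1 := [set v; w].
Let S2 := nbhd e u :\ v.
Let S3 := [set v; w'].
Let r1 := rowof (inner u S1) r0.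
Let r2 := rowof (inner u S2) r0.
Let r3 := rowof (inner u S3) r0.
Let c := cyc4 r0 r1 r2 r3.
Let s' := (c * s)%g.

Lemma flip_s : flip s = s'.
Proof. by rewrite /flip hp hr0. Qed.

Fact er0 : etai r0 = inner u set0.
Proof. by move: hr0; case: pickP => // k /eqP ? [<-]. Qed.

Fact euv : e u v.
Proof. by case/and4P: cuv. Qed.

Fact uU : u \in U.
Proof. by case/and4P: cuv. Qed.

Fact vN : v \in nbhd e u.
Proof. by rewrite inE euv. Qed.

Fact pmk k : hadj e (etai k) (etai' (s k)).
Proof. by move/forallP: pms. Qed.

Fact sinj k k' : etai' (s k) = etai' (s k') -> k = k'.
Proof. by move/etai'_inj/perm_inj. Qed.

Fact notv k S i : etai k = inner u S -> etai' (s k) != outer u v i.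
Proof.
move=> ek; have : in_matching etai etai' s (outer v u i) (outer u v i).
  by case: i; case/and4P: cuv.
case/existsP => k' /orP [/andP [/eqP e1 /eqP e2]|/andP [/eqP e1 _]].
  apply/eqP => e3; have kk : k = k' by apply: sinj; rewrite e3 e2.
  by move: ek; rewrite kk e1.
have := etaiX k'; rewrite e1 inE /= => /andP [_ uV].
by case: (UVF uU uV).
Qed.

Fact gad k S : etai k = inner u S ->
  exists2 z, (z \in nbhd e u) && (z != v) & etai' (s k) = outer u z (z \in S).
Proof.
move=> ek; have := pmk k; rewrite ek => /hadj_inner [z hz ez].
exists z => //; rewrite hz /=; apply/eqP => zv.
by move: (@notv k S (z \in S) ek); rewrite ez zv eqxx.
Qed.

Fact wP : [/\ w \in nbhd e u, w != v & etai' (s r0) = outer u w false].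
Proof.
have [z /andP [hz zv] ez] := gad er0.
by rewrite /w ez /= in_set0; split => //; move: hz; rewrite inE.
Qed.

Fact wN : e u w. Proof. by case: wP; rewrite inE. Qed.
Fact wv : (w == v) = false. Proof. by case: wP => _ /negbTE. Qed.
Fact vw : (v == w) = false. Proof. by rewrite eq_sym wv. Qed.

Fact card_D : #|nbhd e u :\: [set v; w]| = 1%N.
Proof.
rewrite cardsD (setIidPr _) ?e_reg ?cards2 ?vw //.
by rewrite subUset !sub1set vN inE wN.
Qed.

Fact w'P : [/\ e u w', (w' == v) = false & (w' == w) = false].
Proof.
rewrite /w' /w'of; case: pickP => [z|H].
  by rewrite !inE negb_or => /andP [/andP [/negbTE -> /negbTE ->] ->].
have /cards1P [x Dx] : #|nbhd e u :\: [set v; w]| == 1%N by rewrite card_D.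
by move: (H x); rewrite Dx set11.
Qed.

Fact w'N : e u w'. Proof. by case: w'P. Qed.
Fact w'v : (w' == v) = false. Proof. by case: w'P. Qed.
Fact w'w : (w' == w) = false. Proof. by case: w'P. Qed.
Fact vw' : (v == w') = false. Proof. by rewrite eq_sym w'v. Qed.
Fact ww' : (w == w') = false. Proof. by rewrite eq_sym w'w. Qed.

Fact nbhd3 z : z \in nbhd e u -> [\/ z = v, z = w | z = w'].
Proof.
move=> hz; have /cards1P [x Dx] : #|nbhd e u :\: [set v; w]| == 1%N by rewrite card_D.
case: (z =P v) => [|/eqP zv]; first by constructor 1.
case: (z =P w) => [|/eqP zw]; first by constructor 2.
constructor 3.
have zD : z \in nbhd e u :\: [set v; w] by rewrite in_setD hz in_set2 negb_or zv zw.
have w'D : w' \in nbhd e u :\: [set v; w] by rewrite in_setD in_set2 w'v w'w inE w'N.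
by rewrite Dx !inE in zD w'D; rewrite (eqP zD) (eqP w'D).
Qed.

Fact innerX (S : {set T}) : S \subset nbhd e u -> ~~ odd #|S| -> inner u S \in Xset e U V.
Proof. by move=> h1 h2; rewrite inE /= h1 h2 uU. Qed.

Fact vS1 : (S1 \subset nbhd e u) && ~~ odd #|S1|.
Proof. by rewrite /S1 subUset !sub1set vN inE wN cards2 vw. Qed.

Fact vS2 : (S2 \subset nbhd e u) && ~~ odd #|S2|.
Proof.
rewrite /S2 subsetDl /=.
by have := cardsD1 v (nbhd e u); rewrite vN e_reg add1n => -[<-].
Qed.

Fact vS3 : (S3 \subset nbhd e u) && ~~ odd #|S3|.
Proof. by rewrite /S3 subUset !sub1set vN !inE w'N cards2 vw'. Qed.

Fact er1 : etai r1 = inner u S1.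
Proof. by case/andP: vS1 => h1 h2; rewrite /r1 rowofE // innerX. Qed.
Fact er2 : etai r2 = inner u S2.
Proof. by case/andP: vS2 => h1 h2; rewrite /r2 rowofE // innerX. Qed.
Fact er3 : etai r3 = inner u S3.
Proof. by case/andP: vS3 => h1 h2; rewrite /r3 rowofE // innerX. Qed.

Fact rneq k k' (A B : {set T}) x : etai k = inner u A -> etai k' = inner u B ->
  x \in A -> x \notin B -> k != k'.
Proof.
move=> ek ek' xA xB; apply/eqP => kk; move: ek'; rewrite -kk ek; case=> AB.
by move: xA; rewrite AB (negbTE xB).
Qed.

Fact d01 : r0 != r1.
Proof. by rewrite eq_sym (@rneq _ _ _ _ v er1 er0) // ?inE ?eqxx. Qed.
Fact d02 : r0 != r2.
Proof. by rewrite eq_sym (@rneq _ _ _ _ w er2 er0) // !inE ?wv ?wN. Qed.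
Fact d03 : r0 != r3.
Proof. by rewrite eq_sym (@rneq _ _ _ _ v er3 er0) // ?inE ?eqxx. Qed.
Fact d12 : r1 != r2.
Proof. by rewrite (@rneq _ _ _ _ v er1 er2) // !inE ?eqxx. Qed.
Fact d13 : r1 != r3.
Proof. by rewrite (@rneq _ _ _ _ w er1 er3) // !inE ?eqxx ?wv ?ww'. Qed.
Fact d23 : r2 != r3.
Proof. by rewrite eq_sym (@rneq _ _ _ _ v er3 er2) // !inE ?eqxx. Qed.

Fact v0 : etai' (s r0) = outer u w false.
Proof. by case: wP. Qed.

Fact v3 : etai' (s r3) = outer u w' true.
Proof.
have [z /andP [hz zv] ez] := gad er3.
case: (nbhd3 hz) => zz; first by rewrite zz eqxx in zv.
  have : r3 = r0 by apply: sinj; rewrite ez v0 zz !inE wv ww'.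
  by move=> h; move: d03; rewrite h eqxx.
by rewrite ez zz !inE eqxx orbT.
Qed.

Fact v2 : etai' (s r2) = outer u w true.
Proof.
have [z /andP [hz zv] ez] := gad er2.
case: (nbhd3 hz) => zz; first by rewrite zz eqxx in zv.
  by rewrite ez zz !inE wv wN.
have : r2 = r3 by apply: sinj; rewrite ez v3 zz !inE w'v w'N.
by move=> h; move: d23; rewrite h eqxx.
Qed.

Fact v1 : etai' (s r1) = outer u w' false.
Proof.
have [z /andP [hz zv] ez] := gad er1.
case: (nbhd3 hz) => zz; first by rewrite zz eqxx in zv.
  have : r1 = r2 by apply: sinj; rewrite ez v2 zz !inE eqxx orbT.
  by move=> h; move: d12; rewrite h eqxx.
by rewrite ez zz !inE w'v w'w.
Qed.

Fact c0 : c r0 = r1. Proof. by rewrite /c cyc4a ?d01 ?d02 ?d03 ?d12 ?d13 ?d23. Qed.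
Fact c1 : c r1 = r2. Proof. by rewrite /c cyc4b ?d01 ?d02 ?d03 ?d12 ?d13 ?d23. Qed.
Fact c2 : c r2 = r3. Proof. by rewrite /c cyc4c ?d01 ?d02 ?d03 ?d12 ?d13 ?d23. Qed.
Fact c3 : c r3 = r0. Proof. by rewrite /c cyc4d ?d01 ?d02 ?d03 ?d12 ?d13 ?d23. Qed.

Fact s'E k : s' k = s (c k).
Proof. by rewrite /s' permM. Qed.

Fact c_outer k a b i : etai k = outer a b i -> c k = k.
Proof.
move=> ek; rewrite /c cyc4o ?d01 ?d02 ?d03 ?d12 ?d13 ?d23 //; apply/eqP => kr; move: ek; rewrite kr.
- by rewrite er0.
- by rewrite er1.
- by rewrite er2.
- by rewrite er3.
Qed.

Fact wN' : w \in nbhd e u. Proof. by rewrite inE wN. Qed.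
Fact w'N' : w' \in nbhd e u. Proof. by rewrite inE w'N. Qed.
Fact odd0 : ~~ odd #|@set0 T|. Proof. by rewrite cards0. Qed.

Fact pm' : is_pmatching e etai etai' s'.
Proof.
apply/forallP => k; rewrite s'E.
case: (k =P r0) => [->|/eqP k0].
  rewrite c0 er0 v1.
  by have := @hadj_io u set0 w' (sub0set _) odd0 w'N'; rewrite in_set0.
case: (k =P r1) => [->|/eqP k1].
  rewrite c1 er1 v2; case/andP: vS1 => h1 h2.
  by have := @hadj_io u S1 w h1 h2 wN'; rewrite !inE eqxx orbT.
case: (k =P r2) => [->|/eqP k2].
  rewrite c2 er2 v3; case/andP: vS2 => h1 h2.
  by have := @hadj_io u S2 w' h1 h2 w'N'; rewrite !inE w'v w'N.
case: (k =P r3) => [->|/eqP k3].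
  rewrite c3 er3 v0; case/andP: vS3 => h1 h2.
  by have := @hadj_io u S3 w h1 h2 wN'; rewrite !inE wv ww'.
by rewrite /c cyc4o ?d01 ?d02 ?d03 ?d12 ?d13 ?d23 // pmk.
Qed.

Fact cond' : cond s' =1 cond s.
Proof.
move=> [a b]; rewrite /cond /s' /=.
by rewrite !in_matching_cyc // => k [] /c_outer.
Qed.

Fact N' : Nset s'.
Proof.
rewrite /Nset pm' /=; have := cuv; rewrite -cond' => /and4P [h _ m0 m1].
apply/forallPn; exists u; apply/forallPn; exists v.
by rewrite negb_imply negbK h m0 m1.
Qed.

Fact pw : partner (etai' (s' r0)) v = w'.
Proof. by rewrite s'E c0 v1. Qed.

Fact ww : w'of u v w' = w.
Proof.
rewrite /w'of; case: pickP => [z|H].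
  rewrite in_setD in_set2 negb_or => /andP [/andP [zv zw'] hz].
  by case: (nbhd3 hz) => zz; move: zv zw'; rewrite zz ?eqxx.
by move: (H w); rewrite in_setD in_set2 wv ww' inE wN.
Qed.

Fact flip2 : flip s' = s.
Proof.
rewrite /flip (eq_pick cond') hp hr0 /flip_at pw ww.
by rewrite /s' mulgA /c cyc4K ?d01 ?d02 ?d03 ?d12 ?d13 ?d23 // mul1g.
Qed.

Fact odd' : odd_perm s' = ~~ odd_perm s.
Proof. by rewrite /s' odd_permM odd_cyc4 // ?d01 ?d12 ?d23. Qed.

Lemma flip_main : [/\ Nset (flip s), flip (flip s) = s & odd_perm (flip s) = ~~ odd_perm s].
Proof. by rewrite flip_s; split; [exact: N' | exact: flip2 | exact: odd']. Qed.

End FlipProof.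


Local Open Scope ring_scope.

Lemma flipP s : Nset s ->
  [/\ Nset (flip s), flip (flip s) = s & odd_perm (flip s) = ~~ odd_perm s].
Proof.
move=> Ns; have [p0 cp0] := N_cond Ns.
have pms : is_pmatching e etai etai' s by case/andP: Ns.
case hp: [pick p | cond s p] => [[u v]|]; last first.
  by move: hp; case: pickP => // /(_ p0); rewrite cp0.
have cuv : cond s (u, v) by move: hp; case: pickP => // [[a b]] hc [<- <-].
have uU : u \in U by case/and4P: cuv.
case hr: [pick k | etai k == inner u set0] => [r0|]; last first.
  have /codomP [k ek] : inner u set0 \in codom etai.
    by rewrite etai_im inE /= sub0set cards0 uU.
  by move: hr; case: pickP => // /(_ k); rewrite ek eqxx.
exact: (flip_main pms cuv hr hp).
Qed.

Definition hflip s := if Nset s then flip s else s.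

Lemma hflipK : involutive hflip.
Proof.
move=> s; rewrite /hflip; case Ns: (Nset s); last by rewrite Ns.
by case: (flipP Ns) => -> ->.
Qed.

Lemma sumN0 : \sum_(s : 'S_n | Nset s) ((-1) ^+ s : int) = 0.
Proof.
set S := (X in X = 0).
have hinj : injective hflip := can_inj hflipK.
have : S = - S.
  rewrite {1}/S (reindex_inj hinj) /S -sumrN; apply: eq_big => s.
    rewrite /hflip; case Ns: (Nset s) => //.
    by case: (flipP Ns).
  rewrite /hflip; case Ns: (Nset s) => H; last by rewrite Ns in H.
  case: (flipP Ns) => _ _ ->.
  by case: (odd_perm s); rewrite /= ?expr0 ?expr1 ?opprK.
by lia.
Qed.

Lemma det_eq : \det (Mmat e etai etai') =
    (Posz #|UMatch_sgn e etai etai' false| - Posz #|UMatch_sgn e etai etai' true|).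
Proof.
have E (s : 'S_n) : \prod_i Mmat e etai etai' i (s i) =
    (if is_pmatching e etai etai' s then 1 else 0).
  case: (boolP (is_pmatching e etai etai' s)) => [/forallP H|/forallPn [k Hk]].
    by rewrite big1 // => i _; rewrite mxE H.
  by rewrite (bigD1 k) //= mxE (negbTE Hk) mul0r.
rewrite /determinant.
have E' (s : 'S_n) : (-1) ^+ s * \prod_i Mmat e etai etai' i (s i) =
    (if is_pmatching e etai etai' s then (-1) ^+ s else 0 : int).
  by rewrite E; case: ifP; rewrite ?mulr1 ?mulr0.
rewrite (eq_bigr _ (fun s _ => E' s)).
rewrite -big_mkcond /=.
rewrite (bigID (fun s => is_uniform e etai etai' s)) /=.
have -> : \sum_(s : 'S_n | is_pmatching e etai etai' s && ~~ is_uniform e etai etai' s)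
      ((-1) ^+ s : int) = 0 by exact: sumN0.
rewrite addr0 (bigID (fun s : 'S_n => odd_perm s)) /=.
have -> : \sum_(s : 'S_n | is_pmatching e etai etai' s && is_uniform e etai etai' s && odd_perm s)
      ((-1) ^+ s : int) = \sum_(s in UMatch_sgn e etai etai' true) (-1 : int).
  apply: eq_big => s; first by rewrite inE andbA eqb_id.
  by case/andP => _ ->.
have -> : \sum_(s : 'S_n | is_pmatching e etai etai' s && is_uniform e etai etai' s && ~~ odd_perm s)
      ((-1) ^+ s : int) = \sum_(s in UMatch_sgn e etai etai' false) (1 : int).
  apply: eq_big => s; first by rewrite inE andbA eqbF_neg.
  by case/andP => _ /negbTE ->.
rewrite !sumr_const addrC.
by rewrite mulNrn !natz.
Qed.
End Main.

Local Open Scope ring_scope.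

Theorem mainTheorem2 (T : finType) (e : rel T) (U V : {set T})
  (e_sym : symmetric e) (e_irr : irreflexive e)
  (UV_disj : [disjoint U & V]) (UV_cov : U :|: V = setT)
  (e_bip : forall x y, e x y -> ((x \in U) && (y \in V)) || ((x \in V) && (y \in U)))
  (e_reg : forall v, #|nbhd e v| = 3%N)
  (m : nat) (hmU : #|U| = m) (hmV : #|V| = m) (n : nat) (hn : n = (10 * m)%N)
  (etai etai' : 'I_n -> hatV T)
  (etai_inj : injective etai) (etai_im : forall w, (w \in codom etai) = (w \in Xset e U V))
  (etai'_inj : injective etai') (etai'_im : forall w, (w \in codom etai') = (w \in Yset e U V)) :
  \det (Mmat e etai etai') =
    (Posz #|UMatch_sgn e etai etai' false| - Posz #|UMatch_sgn e etai etai' true|).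
Proof. exact: (det_eq e_sym UV_disj e_bip e_reg etai_im etai'_inj). Qed.
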